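(* Let $(\rho,u,\Theta,\beta)$ be a smooth solution of the NSME system (with $\rho>0$, $\Theta>0$, $\beta\in\mathcal S$), and let $$S=\rho\Big(\langle m^{-1}\rangle_\beta\big(\log\rho-\log Z(\beta,\Theta)-1-\tfrac n2\big)+\beta\Big).$$ Then $$\partial_tS+\nabla_x\cdot\tilde\phi=-\varepsilon\Big\{\nu|\nabla_x\chi|^2+\kappa\Big|\frac{\nabla_x\Theta}{\Theta}\Big|^2+\frac{\mu}{2\Theta}\sigma(u):\sigma(u)\Big\}\le0,$$ where $$\tilde\phi=Su+\varepsilon\Big\{-\nu\big(\log\rho-\log Z(\beta,\Theta)-1-\tfrac n2\big)\nabla_x\chi+\kappa\frac{\nabla_x\Theta}{\Theta}\Big\}.$$
   Context: Let $n\ge1$, $\varepsilon>0$, $(\gamma_m)_{m\ge1}$ in $[0,\infty)$ with $\mathcal S:=\{\beta:\sum_m\frac{me^{\beta m}}{\gamma_m}<\infty\}\ne\emptyset$; $\langle a_m\rangle_\beta:=\sum_m\frac{me^{\beta m}}{\gamma_m}a_m/\sum_m\frac{me^{\beta m}}{\gamma_m}$; $Z(\beta,\Theta)=(2\pi\Theta)^{n/2}\sum_m\frac{me^{\beta m}}{\gamma_m}$. $\mu=\rho\Theta\langle m^{-1}\rangle_\beta$, $\kappa=\frac{n+2}2\rho\Theta\langle m^{-2}\rangle_\beta$, $\nu=\rho\Theta(\langle m^{-2}\rangle_\beta-\langle m^{-1}\rangle_\beta^2)$; $\sigma(u)=\nabla_xu+(\nabla_xu)^T-\frac2n(\nabla_x\cdot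 u)\mathrm I_n$; $\chi=\log(\rho\Theta/\sum_m\frac{me^{\beta m}}{\gamma_m})$; $A:B=\sum_{ij}A_{ij}B_{ij}$. The NSME system for $(\rho,u,\Theta,\beta)(x,t)$, $x\in\mathbb{R}^n$: $\partial_t(\rho\langle m^{-1}\rangle_\beta)+\nabla_x\cdot(\rho\langle m^{-1}\rangle_\beta u)=\varepsilon\nabla_x\cdot(\nu\nabla_x\chi)$; $\partial_t\rho+\nabla_x\cdot(\rho u)=0$; $\partial_t(\rho u)+\nabla_x\cdot(\rho u\otimes u)+\nabla_x(\rho\Theta\langle m^{-1}\rangle_\beta)=\varepsilon\nabla_x\cdot(\mu\sigma(u))$; $\partial_t(\rho|u|^2+n\rho\Theta\langle m^{-1}\rangle_\beta)+\nabla_x\cdot(\rho|u|^2u+(n+2)\rho\Theta\langle m^{-1}\rangle_\beta u)=\varepsilon\nabla_x\cdot((n+2)\nu\Theta\nabla_x\chi+2\kappa\nabla_x\Theta+2\mu\sigma(u)u)$. *)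

(* Defs.v *)
From mathcomp Require Import ssreflect ssrbool eqtype ssrnat fintype bigop.
From Stdlib Require Import Reals.
From Coquelicot Require Import Coquelicot.
Open Scope R_scope.

(* A point of R^n is a function 'I_n -> R; a scalar field on R^n x R (space-time). *)
Definition field (n : nat) := ('I_n -> R) -> R -> R.

Definition sumI (n : nat) (f : 'I_n -> R) : R := \big[Rplus/0]_(i < n) f i.

Definition upd {n : nat} (x : 'I_n -> R) (i : 'I_n) (s : R) : 'I_n -> R :=
  fun j => if j == i then s else x j.

Definition dx {n : nat} (i : 'I_n) (f : field n) : field n :=
  fun x t => Derive (fun s => f (upd x i s) t) (x i).
Definition dt {n : nat} (f : field n) : field n :=
  fun x t => Derive (fun s => f x s) t.

Definition jcont {n : nat} (f : field n) : Prop :=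
  forall x t eps, 0 < eps -> exists delta, 0 < delta /\
    forall y s, (forall i, Rabs (y i - x i) < delta) -> Rabs (s - t) < delta ->
      Rabs (f y s - f x t) < eps.

Fixpoint Ck {n : nat} (k : nat) (f : field n) : Prop :=
  jcont f /\
  match k with
  | O => True
  | S k' =>
      (forall i x t, ex_derive (fun s => f (upd x i s) t) (x i)) /\
      (forall x t, ex_derive (fun s => f x s) t) /\
      (forall i, Ck k' (dx i f)) /\ Ck k' (dt f)
  end.

Definition smooth {n : nat} (f : field n) : Prop := forall k, Ck k f.

(* weight m e^{beta m} / gamma_m ; the sequence (gamma_m)_{m>=1} is gamma : nat -> R,
   gamma 0 is irrelevant *)
Definition wt (gamma : nat -> R) (beta : R) (m : nat) : R :=
  INR m * exp (beta * INR m) / gamma m.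

Definition sum1 (a : nat -> R) : R := Series (fun k => a (S k)).

(* beta in S : sum_{m>=1} m e^{beta m}/gamma_m < infinity
   (a term with gamma_m = 0 is +infinity, hence the positivity requirement) *)
Definition inS (gamma : nat -> R) (beta : R) : Prop :=
  (forall m, (1 <= m)%nat -> 0 < gamma m) /\
  ex_series (fun k => wt gamma beta (S k)).

Definition avg (gamma : nat -> R) (beta : R) (a : nat -> R) : R :=
  sum1 (fun m => wt gamma beta m * a m) / sum1 (wt gamma beta).

Definition Mm1 gamma beta := avg gamma beta (fun m => / INR m).
Definition Mm2 gamma beta := avg gamma beta (fun m => / (INR m ^ 2)).

Definition Zpart (n : nat) (gamma : nat -> R) (beta Th : R) : R :=
  Rpower (2 * PI * Th) (INR n / 2) * sum1 (wt gamma beta).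

Definition mu_c gamma (rho Th beta : R) := rho * Th * Mm1 gamma beta.
Definition kappa_c (n : nat) gamma (rho Th beta : R) :=
  (INR n + 2) / 2 * rho * Th * Mm2 gamma beta.
Definition nu_c gamma (rho Th beta : R) :=
  rho * Th * (Mm2 gamma beta - Mm1 gamma beta ^ 2).
Definition chi_c gamma (rho Th beta : R) :=
  ln (rho * Th / sum1 (wt gamma beta)).

Definition divx {n : nat} (u : 'I_n -> field n) : field n :=
  fun x t => sumI n (fun i => dx i (u i) x t).

Definition kron {n : nat} (i j : 'I_n) : R := if i == j then 1 else 0.

Definition sigma {n : nat} (u : 'I_n -> field n) (i j : 'I_n) : field n :=
  fun x t => dx j (u i) x t + dx i (u j) x t - 2 / INR n * divx u x t * kron i j.

Definition NSME (n : nat) (eps : R) (gamma : nat -> R)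
  (rho : field n) (u : 'I_n -> field n) (Th beta : field n) : Prop :=
  let M1 : field n := fun x t => Mm1 gamma (beta x t) in
  let mu : field n := fun x t => mu_c gamma (rho x t) (Th x t) (beta x t) in
  let kappa : field n := fun x t => kappa_c n gamma (rho x t) (Th x t) (beta x t) in
  let nu : field n := fun x t => nu_c gamma (rho x t) (Th x t) (beta x t) in
  let chi : field n := fun x t => chi_c gamma (rho x t) (Th x t) (beta x t) in
  let usq : field n := fun x t => sumI n (fun j => u j x t ^ 2) in
  forall x t,
  dt (fun y s => rho y s * M1 y s) x t
    + sumI n (fun i => dx i (fun y s => rho y s * M1 y s * u i y s) x t)
    = eps * sumI n (fun i => dx i (fun y s => nu y s * dx i chi y s) x t)
  /\
  dt rho x t + sumI n (fun i => dx i (fun y s => rho y s * u i y s) x t) = 0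
  /\
  (forall j : 'I_n,
     dt (fun y s => rho y s * u j y s) x t
     + sumI n (fun i => dx i (fun y s => rho y s * u j y s * u i y s) x t)
     + dx j (fun y s => rho y s * Th y s * M1 y s) x t
     = eps * sumI n (fun i => dx i (fun y s => mu y s * sigma u j i y s) x t))
  /\
  dt (fun y s => rho y s * usq y s + INR n * rho y s * Th y s * M1 y s) x t
  + sumI n (fun i => dx i (fun y s =>
        rho y s * usq y s * u i y s
        + (INR n + 2) * rho y s * Th y s * M1 y s * u i y s) x t)
  = eps * sumI n (fun i => dx i (fun y s =>
        (INR n + 2) * nu y s * Th y s * dx i chi y s
        + 2 * kappa y s * dx i Th y s
        + 2 * mu y s * sumI n (fun j => sigma u i j y s * u j y s)) x t).

Definition entropy (n : nat) gamma (rho Th beta : field n) : field n :=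
  fun x t => rho x t * (Mm1 gamma (beta x t) *
     (ln (rho x t) - ln (Zpart n gamma (beta x t) (Th x t)) - 1 - INR n / 2)
     + beta x t).

Definition eflux (n : nat) (eps : R) gamma (rho : field n) (u : 'I_n -> field n)
  (Th beta : field n) (i : 'I_n) : field n :=
  fun x t =>
    entropy n gamma rho Th beta x t * u i x t
    + eps * ( - nu_c gamma (rho x t) (Th x t) (beta x t)
                * (ln (rho x t) - ln (Zpart n gamma (beta x t) (Th x t)) - 1 - INR n / 2)
                * dx i (fun y s => chi_c gamma (rho y s) (Th y s) (beta y s)) x t
              + kappa_c n gamma (rho x t) (Th x t) (beta x t) * (dx i Th x t / Th x t)).

Definition dissip (n : nat) gamma (rho : field n) (u : 'I_n -> field n)
  (Th beta : field n) : field n :=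
  fun x t =>
    nu_c gamma (rho x t) (Th x t) (beta x t)
      * sumI n (fun i => (dx i (fun y s => chi_c gamma (rho y s) (Th y s) (beta y s)) x t) ^ 2)
    + kappa_c n gamma (rho x t) (Th x t) (beta x t)
      * sumI n (fun i => (dx i Th x t / Th x t) ^ 2)
    + mu_c gamma (rho x t) (Th x t) (beta x t) / (2 * Th x t)
      * sumI n (fun i => sumI n (fun j => sigma u i j x t * sigma u i j x t)).

(* Main.v *)
Require Import Defs.
From HB Require Import structures.
From mathcomp Require Import ssreflect ssrbool eqtype ssrnat fintype bigop.
From Stdlib Require Import Reals Lra FunctionalExtensionality.
From Coquelicot Require Import Coquelicot.
Open Scope R_scope.

HB.instance Definition _ := Monoid.isComLaw.Build R 0 Rplus
  (fun x y z => Logic.eq_sym (Rplus_assoc x y z)) Rplus_comm Rplus_0_l.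

Definition G (c : nat -> R) (b : R) : R := sum1 (fun m => c m * exp (b * INR m)).
Definition aG (c : nat -> R) : nat -> R := PS_incr_1 (fun k => c (S k)).

Lemma exp_INR_pow b k : exp (b * INR k) = exp b ^ k.
Proof.
elim: k => [|k IH]; first by rewrite /= Rmult_0_r exp_0.
by rewrite S_INR Rmult_plus_distr_l Rmult_1_r exp_plus IH /= Rmult_comm.
Qed.

Lemma G_PS c b : G c b = PSeries (aG c) (exp b).
Proof.
rewrite /G /aG PSeries_incr_1 /PSeries /sum1 -Series_scal_l.
apply Series_ext => k. rewrite exp_INR_pow /=. ring.
Qed.

Lemma radius_INR c : CV_radius (aG (fun m => INR m * c m)) = CV_radius (aG c).
Proof.
rewrite /aG CV_radius_incr_1 -(CV_radius_derive (PS_incr_1 (fun k => c (S k)))).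
by apply CV_radius_ext.
Qed.

Lemma G_derive c b : Rbar_lt (exp b) (CV_radius (aG c)) ->
  is_derive (G c) b (G (fun m => INR m * c m) b).
Proof.
move=> H.
have E : forall z, G c z = PSeries (aG c) (exp z) by move=> z; apply G_PS.
apply: (is_derive_ext (fun z => PSeries (aG c) (exp z))) => [z|]; first by rewrite E.
rewrite G_PS /aG PSeries_incr_1.
have -> : PSeries (fun k => INR (S k) * c (S k)) (exp b)
   = PSeries (PS_derive (PS_incr_1 (fun k => c (S k)))) (exp b).
  by apply PSeries_ext.
have := is_derive_comp (PSeries (aG c)) exp b _ _ (is_derive_PSeries (aG c) (exp b) _) (is_derive_exp b).
rewrite /scal /= /mult /=. apply.
rewrite Rabs_pos_eq //. apply Rlt_le, exp_pos.
Qed.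

Lemma G_ex c b : Rbar_lt (exp b) (CV_radius (aG c)) ->
  ex_series (fun k => c (S k) * exp (b * INR (S k))).
Proof.
move=> H.
have H1 := CV_disk_inside (aG c) (exp b).
rewrite Rabs_pos_eq in H1; last by apply Rlt_le, exp_pos.
have H2 := ex_series_Rabs _ (H1 H).
have H3 := proj1 (ex_series_incr_1 _) H2.
apply: ex_series_ext H3 => k. by rewrite exp_INR_pow.
Qed.

Lemma G_eq c b : G c b = Series (fun k => c (S k) * exp (b * INR (S k))).
Proof. by []. Qed.

Lemma Series_nonneg a : (forall k, 0 <= a k) -> ex_series a -> 0 <= Series a.
Proof.
move=> Ha Hex.
have := Series_le (fun _ => 0) a (fun k => conj (Rle_refl 0) (Ha k)) Hex.
have -> : Series (fun _ => 0) = 0.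
  rewrite (Series_ext (fun _ => 0) (fun n => 0 * (fun _ => 0) n)); last by move=> _; rewrite Rmult_0_l.
  by rewrite (Series_scal_l 0 (fun _ => 0)) Rmult_0_l.
done.
Qed.

Lemma G_nonneg c b : (forall m, (1 <= m)%nat -> 0 <= c m) ->
  Rbar_lt (exp b) (CV_radius (aG c)) -> 0 <= G c b.
Proof.
move=> Hc H. rewrite G_eq. apply Series_nonneg; last by apply G_ex.
move=> k. apply Rmult_le_pos; [apply Hc => // | apply Rlt_le, exp_pos].
Qed.

Lemma G_pos c b : (forall m, (1 <= m)%nat -> 0 < c m) ->
  Rbar_lt (exp b) (CV_radius (aG c)) -> 0 < G c b.
Proof.
move=> Hc H. rewrite G_eq Series_incr_1; last by apply G_ex.
apply Rplus_lt_le_0_compat.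
  apply Rmult_lt_0_compat; [apply Hc => // | apply exp_pos].
apply Series_nonneg.
  move=> k. apply Rmult_le_pos; [apply Rlt_le, Hc => // | apply Rlt_le, exp_pos].
by apply (proj1 (ex_series_incr_1 (fun k => c (S k) * exp (b * INR (S k))))), G_ex.
Qed.

Lemma radius_from_disk a r : ex_series (fun k => Rabs (a k * r ^ k)) ->
  Rbar_le (Rabs r) (CV_radius a).
Proof.
move=> H. apply Rbar_not_lt_le => H'.
apply: (CV_disk_outside a r H').
by apply ex_series_lim_0, ex_series_Rabs.
Qed.
Section Sums.
Context {n : nat}.

Lemma sumI_ext (f g : 'I_n -> R) : (forall i, f i = g i) -> sumI n f = sumI n g.
Proof. move=> H; rewrite /sumI; apply eq_bigr => i _; apply H. Qed.

Lemma sumI_plus (f g : 'I_n -> R) : sumI n (fun i => f i + g i) = sumI n f + sumI n g.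
Proof. by rewrite /sumI big_split. Qed.

Lemma sumI_scal c (f : 'I_n -> R) : sumI n (fun i => c * f i) = c * sumI n f.
Proof.
rewrite /sumI; elim/big_rec2: _ => [|i y1 y2 _ ->]; ring.
Qed.

Lemma sumI_swap (F : 'I_n -> 'I_n -> R) :
  sumI n (fun i => sumI n (fun j => F i j)) = sumI n (fun j => sumI n (fun i => F i j)).
Proof. by rewrite /sumI exchange_big. Qed.

Lemma sumI_const c : sumI n (fun _ => c) = INR n * c.
Proof.
rewrite /sumI big_const_ord; elim: n => [|k IH]; first by simpl; ring.
rewrite iterS IH S_INR; ring.
Qed.

Lemma sumI_kron (F : 'I_n -> R) i : sumI n (fun j => F j * kron i j) = F i.
Proof.
rewrite /sumI (bigD1 i) //= /kron eqxx big1 => [|j Hj]; first ring.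
by rewrite /kron eq_sym (negbTE Hj) Rmult_0_r.
Qed.

End Sums.
Section Moments.
Variable gamma : nat -> R.
Hypothesis Hg : forall m, (1 <= m)%nat -> 0 < gamma m.

Definition cW m := INR m / gamma m.
Definition cA m := / gamma m.
Definition cB m := / (INR m * gamma m).
Definition cW2 m := INR m * cW m.
Definition Rad := CV_radius (aG cW).
Definition cc b := G cW2 b / G cW b.

Lemma gS k : gamma (S k) <> 0.
Proof. apply Rgt_not_eq, Hg => //. Qed.
Lemma INRS k : INR (S k) <> 0.
Proof. apply not_0_INR => //. Qed.

Lemma W_eq b : sum1 (wt gamma b) = G cW b.
Proof. rewrite /sum1 /G; apply Series_ext => k; rewrite /wt /cW /Rdiv; ring. Qed.

Lemma M1_eq b : Mm1 gamma b = G cA b / G cW b.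
Proof.
rewrite /Mm1 /avg W_eq; congr (_ / _).
rewrite /sum1 /G; apply Series_ext => k; rewrite /wt /cA.
have := gS k; have := INRS k => h1 h2. field. split => //.
Qed.

Lemma M2_eq b : Mm2 gamma b = G cB b / G cW b.
Proof.
rewrite /Mm2 /avg W_eq; congr (_ / _).
rewrite /sum1 /G; apply Series_ext => k; rewrite /wt /cB.
have := gS k; have := INRS k => h1 h2. field. split => //.
Qed.

Lemma rad_A : CV_radius (aG cA) = Rad.
Proof. symmetry; exact: (radius_INR cA). Qed.

Lemma rad_B : CV_radius (aG cB) = Rad.
Proof.
rewrite -rad_A -radius_INR; apply CV_radius_ext => [[|k]] //.
change (INR (S k) * cB (S k) = cA (S k)); rewrite /cB /cA; have := gS k; have := INRS k => h1 h2. field. split => //.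
Qed.

Lemma rad_W2 : CV_radius (aG cW2) = Rad.
Proof. exact: (radius_INR cW). Qed.

Lemma W_pos b : Rbar_lt (exp b) Rad -> 0 < G cW b.
Proof.
move=> H; apply G_pos => // m Hm; rewrite /cW /Rdiv.
apply Rmult_lt_0_compat; [apply lt_0_INR; apply/ssrnat.leP => // | apply Rinv_0_lt_compat, Hg => //].
Qed.

Lemma A_nonneg b : Rbar_lt (exp b) Rad -> 0 <= G cA b.
Proof.
move=> H; apply G_nonneg; last by rewrite rad_A.
move=> m Hm; apply Rlt_le, Rinv_0_lt_compat, Hg => //.
Qed.

Lemma B_nonneg b : Rbar_lt (exp b) Rad -> 0 <= G cB b.
Proof.
move=> H; apply G_nonneg; last by rewrite rad_B.
move=> m Hm; apply Rlt_le, Rinv_0_lt_compat, Rmult_lt_0_compat;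
  [apply lt_0_INR; apply/ssrnat.leP => // | apply Hg => //].
Qed.

Lemma HW b : Rbar_lt (exp b) Rad -> is_derive (fun z => sum1 (wt gamma z)) b (G cW2 b).
Proof.
move=> H; apply: (is_derive_ext (G cW)) => [z|]; first by rewrite W_eq.
by apply G_derive.
Qed.

Lemma HM1 b : Rbar_lt (exp b) Rad -> is_derive (Mm1 gamma) b (1 - Mm1 gamma b * cc b).
Proof.
move=> H; apply: (is_derive_ext (fun z => G cA z / G cW z)) => [z|]; first by rewrite M1_eq.
have HA : is_derive (G cA) b (G cW b).
  have -> : G cW b = G (fun m => INR m * cA m) b by [].
  by apply G_derive; rewrite rad_A.
have HWd := G_derive cW b H.
have Wp := W_pos b H.
have := is_derive_div _ _ _ _ _ HA HWd (Rgt_not_eq _ _ Wp).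
rewrite M1_eq /cc; set d := (_ / _ ^ 2); set d' := (1 - _).
have -> : d = d' by rewrite /d /d' /cW2; field; apply Rgt_not_eq.
done.
Qed.

Lemma HlnW b : Rbar_lt (exp b) Rad -> is_derive (fun z => ln (sum1 (wt gamma z))) b (cc b).
Proof.
move=> H; have Wp := W_pos b H.
have := is_derive_comp ln _ b _ _ (is_derive_ln (sum1 (wt gamma b)) _) (HW b H).
rewrite /scal /= /mult /= W_eq /cc => h; apply: h => //.
Qed.

Lemma ex_cc b : Rbar_lt (exp b) Rad -> ex_derive cc b.
Proof.
move=> H; eexists; apply is_derive_div.
- by apply G_derive; rewrite rad_W2.
- by apply G_derive.
- apply Rgt_not_eq, W_pos, H.
Qed.

Lemma ex_M2 b : Rbar_lt (exp b) Rad -> ex_derive (Mm2 gamma) b.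
Proof.
move=> H; eexists; apply: (is_derive_ext (fun z => G cB z / G cW z)) => [z|]; first by rewrite M2_eq.
apply is_derive_div.
- by apply G_derive; rewrite rad_B.
- by apply G_derive.
- apply Rgt_not_eq, W_pos, H.
Qed.

Lemma M1_nonneg b : Rbar_lt (exp b) Rad -> 0 <= Mm1 gamma b.
Proof.
move=> H; rewrite M1_eq /Rdiv; apply Rmult_le_pos; first by apply A_nonneg.
by apply Rlt_le, Rinv_0_lt_compat, W_pos.
Qed.

Lemma M2_nonneg b : Rbar_lt (exp b) Rad -> 0 <= Mm2 gamma b.
Proof.
move=> H; rewrite M2_eq /Rdiv; apply Rmult_le_pos; first by apply B_nonneg.
by apply Rlt_le, Rinv_0_lt_compat, W_pos.
Qed.

Lemma M_var b : Rbar_lt (exp b) Rad -> 0 <= Mm2 gamma b - Mm1 gamma b ^ 2.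
Proof.
move=> H; have Wp := W_pos b H.
set M := Mm1 gamma b.
have exW := G_ex cW b H.
have exA : ex_series (fun k => cA (S k) * exp (b * INR (S k))) by apply G_ex; rewrite rad_A.
have exB : ex_series (fun k => cB (S k) * exp (b * INR (S k))) by apply G_ex; rewrite rad_B.
have key : 0 <= G cB b - 2 * M * G cA b + M ^ 2 * G cW b.
  have E : G cB b - 2 * M * G cA b + M ^ 2 * G cW b =
    Series (fun k => cW (S k) * exp (b * INR (S k)) * (/ INR (S k) - M) ^ 2).
    rewrite !G_eq -!Series_scal_l -Series_minus; last by apply: ex_series_scal_l.
    rewrite -Series_plus; last by apply: ex_series_scal_l.
      apply Series_ext => k; rewrite /cW /cB /cA.
      have := gS k; have := INRS k => h1 h2. field. split => //.
    apply: ex_series_minus => //; by apply: ex_series_scal_l.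
    done.
  rewrite E; apply Series_nonneg.
    move=> k; apply Rmult_le_pos; last by apply pow2_ge_0.
    apply Rmult_le_pos; last by apply Rlt_le, exp_pos.
    rewrite /cW /Rdiv; apply Rmult_le_pos; first by apply pos_INR.
    by apply Rlt_le, Rinv_0_lt_compat, Hg.
  have exS : ex_series (fun k => cB (S k) * exp (b * INR (S k)) - 2 * M * (cA (S k) * exp (b * INR (S k))) + M ^ 2 * (cW (S k) * exp (b * INR (S k)))).
    apply: ex_series_plus; last by apply: ex_series_scal_l.
    apply: ex_series_minus => //; by apply: ex_series_scal_l.
  apply: (ex_series_ext _ _ _ exS).
    move=> k; rewrite /cW /cB /cA; match goal with |- ?a = ?b => change (@eq R a b) end.
    have := gS k; have := INRS k => h1 h2. field. split => //.
have HM : M = G cA b / G cW b by rewrite /M M1_eq.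
rewrite M2_eq -/M.
have -> : G cB b / G cW b - M ^ 2 = (G cB b - 2 * M * G cA b + M ^ 2 * G cW b) / G cW b.
  rewrite HM; field; apply Rgt_not_eq => //.
apply Rmult_le_pos => //; by apply Rlt_le, Rinv_0_lt_compat.
Qed.

Lemma rad_inS b : inS gamma b -> Rbar_le (exp b) Rad.
Proof.
move=> [_ Hex].
have H := radius_from_disk (aG cW) (exp b).
rewrite Rabs_pos_eq in H; last by apply Rlt_le, exp_pos.
apply H; apply (ex_series_incr_1 (fun k => Rabs (aG cW k * exp b ^ k))).
apply: ex_series_ext Hex => k.
change (wt gamma b (S k) = Rabs (cW (S k) * exp b ^ (S k))).
rewrite -exp_INR_pow Rabs_pos_eq /wt /cW /Rdiv; first ring.
apply Rmult_le_pos; last by apply Rlt_le, exp_pos.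
apply Rmult_le_pos; [apply pos_INR | apply Rlt_le, Rinv_0_lt_compat, Hg => //].
Qed.

Lemma sumI_nonneg {m : nat} (f : 'I_m -> R) : (forall i, 0 <= f i) -> 0 <= sumI m f.
Proof.
move=> H; rewrite /sumI; elim/big_rec: _ => [|i y _ Hy]; first lra.
apply Rplus_le_le_0_compat => //.
Qed.

End Moments.
Section Line.
Context {n : nat}.

Lemma upd_id (x : 'I_n -> R) i : upd x i (x i) = x.
Proof. apply functional_extensionality => j; rewrite /upd; case: eqP => [->|] //. Qed.
Lemma upd_upd (x : 'I_n -> R) i s s' : upd (upd x i s') i s = upd x i s.
Proof. apply functional_extensionality => j; rewrite /upd; case: eqP => //. Qed.
Lemma upd_same (x : 'I_n -> R) i s : upd x i s i = s.
Proof. by rewrite /upd eqxx. Qed.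

Definition lfun (x : 'I_n -> R) (t : R) (l : option 'I_n) (f : field n) : R -> R :=
  fun s => match l with None => f x s | Some i => f (upd x i s) t end.
Definition lpt (x : 'I_n -> R) (t : R) (l : option 'I_n) : R :=
  match l with None => t | Some i => x i end.
Lemma lfun_pt x t l f : lfun x t l f (lpt x t l) = f x t.
Proof. case: l => [i|] //=; by rewrite upd_id. Qed.

Definition HD x t l (f : field n) (d : R) := is_derive (lfun x t l f) (lpt x t l) d.
Definition ld x t l (f : field n) : R := Derive (lfun x t l f) (lpt x t l).

Lemma ld_dt f x t : dt f x t = ld x t None f. Proof. by []. Qed.
Lemma ld_dx f x t i : dx i f x t = ld x t (Some i) f. Proof. by []. Qed.

Lemma HD_unique x t l f d : HD x t l f d -> ld x t l f = d.
Proof. apply is_derive_unique. Qed.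

Lemma HD_eq x t l f (d d' : R) : HD x t l f d -> d = d' -> HD x t l f d'.
Proof. by move=> H <-. Qed.

Lemma HD_ext x t l (f g : field n) d : (forall y s, f y s = g y s) -> HD x t l f d -> HD x t l g d.
Proof.
move=> E; rewrite /HD; apply: is_derive_ext => s; rewrite /lfun; case: l => //.
Qed.

Lemma HD_const x t l c : HD x t l (fun _ _ => c) 0.
Proof. rewrite /HD /lfun; case: l => [i|]; apply: (is_derive_const c). Qed.

Lemma HD_mult x t l (f g : field n) df dg : HD x t l f df -> HD x t l g dg ->
  HD x t l (fun y s => f y s * g y s) (df * g x t + f x t * dg).
Proof.
rewrite /HD => Hf Hg.
have := is_derive_mult _ _ _ _ _ Hf Hg (fun a b => Rmult_comm a b).
rewrite !lfun_pt /plus /mult /=.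
have -> : (fun x0 => lfun x t l f x0 * lfun x t l g x0) = lfun x t l (fun y s => f y s * g y s).
  by apply functional_extensionality => s; case: l {Hf Hg}.
done.
Qed.

Lemma HD_plus x t l (f g : field n) df dg : HD x t l f df -> HD x t l g dg ->
  HD x t l (fun y s => f y s + g y s) (df + dg).
Proof.
rewrite /HD => Hf Hg.
have := is_derive_plus _ _ _ _ _ Hf Hg.
rewrite /plus /=.
have -> : (fun x0 => lfun x t l f x0 + lfun x t l g x0) = lfun x t l (fun y s => f y s + g y s).
  by apply functional_extensionality => s; case: l {Hf Hg}.
done.
Qed.

Lemma HD_opp x t l (f : field n) df : HD x t l f df ->
  HD x t l (fun y s => - f y s) (- df).
Proof.
rewrite /HD => Hf.
have := is_derive_opp _ _ _ Hf.
rewrite /opp /=.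
have -> : (fun x0 => - lfun x t l f x0) = lfun x t l (fun y s => - f y s).
  by apply functional_extensionality => s; case: l {Hf}.
done.
Qed.

Lemma HD_minus x t l (f g : field n) df dg : HD x t l f df -> HD x t l g dg ->
  HD x t l (fun y s => f y s - g y s) (df - dg).
Proof.
move=> Hf Hg; apply: (HD_ext _ _ _ (fun y s => f y s + - g y s)); first by [].
by apply HD_plus; [exact Hf | apply HD_opp; exact Hg].
Qed.

Lemma HD_comp x t l (phi : R -> R) (f : field n) dphi df :
  is_derive phi (f x t) dphi -> HD x t l f df ->
  HD x t l (fun y s => phi (f y s)) (df * dphi).
Proof.
rewrite /HD => Hp Hf.
rewrite -(lfun_pt x t l f) in Hp.
have := is_derive_comp _ _ _ _ _ Hp Hf.
rewrite /scal /= /mult /=.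
have -> : (fun x0 => phi (lfun x t l f x0)) = lfun x t l (fun y s => phi (f y s)).
  by apply functional_extensionality => s; case: l {Hf Hp}.
done.
Qed.

Lemma HD_scal x t l c (f : field n) df : HD x t l f df ->
  HD x t l (fun y s => c * f y s) (c * df).
Proof.
move=> Hf; apply: HD_eq; first by apply HD_mult; [apply HD_const | exact Hf].
cbv beta; ring.
Qed.

Lemma HD_sum x t l m (F : 'I_m -> field n) dF : (forall j, HD x t l (F j) (dF j)) ->
  HD x t l (fun y s => sumI m (fun j => F j y s)) (sumI m dF).
Proof.
move=> H; rewrite /sumI.
have gen : forall (r : list 'I_m), HD x t l (fun y s => \big[Rplus/0]_(j <- r) F j y s)
                                  (\big[Rplus/0]_(j <- r) dF j).
  elim => [|a r IH].
    apply: (HD_ext _ _ _ (fun _ _ => 0)); first by move=> y s; rewrite big_nil.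
    by rewrite big_nil; apply HD_const.
  apply: (HD_ext _ _ _ (fun y s => F a y s + \big[Rplus/0]_(j <- r) F j y s)).
    by move=> y s; rewrite big_cons.
  rewrite big_cons; by apply HD_plus.
exact: gen.
Qed.

Lemma HD_inv x t l (f : field n) df : f x t <> 0 -> HD x t l f df ->
  HD x t l (fun y s => / f y s) (df * (- / (f x t) ^ 2)).
Proof.
move=> Hf H; apply: HD_comp; last exact H.
have := is_derive_inv (fun z => z) (f x t) 1 (is_derive_id _) Hf.
by rewrite /Rdiv Ropp_mult_distr_l_reverse Rmult_1_l.
Qed.

Lemma HD_div x t l (f g : field n) df dg : g x t <> 0 -> HD x t l f df -> HD x t l g dg ->
  HD x t l (fun y s => f y s / g y s) (df * / g x t + f x t * (dg * (- / (g x t) ^ 2))).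
Proof.
move=> Hg Hf Hd; apply: HD_mult => //; by apply HD_inv.
Qed.

Lemma HD_ln x t l (f : field n) df : 0 < f x t -> HD x t l f df ->
  HD x t l (fun y s => ln (f y s)) (df * / f x t).
Proof. move=> Hf H; apply: HD_comp; [by apply is_derive_ln | exact H]. Qed.

Lemma HD_pow2 x t l (f : field n) df : HD x t l f df ->
  HD x t l (fun y s => f y s ^ 2) (2 * f x t * df).
Proof.
move=> H; apply: (HD_ext _ _ _ (fun y s => f y s * f y s)); first by move=> y s; cbv beta; ring.
apply: HD_eq; first by apply HD_mult; [exact H | exact H]. cbv beta; ring.
Qed.

Lemma Ck1_HD (f : field n) x t l : Ck 1 f -> HD x t l f (ld x t l f).
Proof.
move=> [_ [Hx [Ht _]]]; rewrite /HD /ld; apply Derive_correct.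
case: l => [i|] /=; [apply Hx | apply Ht].
Qed.

End Line.
Section Fields.
Set Default Proof Using "All".
Variable n : nat.
Variable gamma : nat -> R.
Variables (rho : field n) (u : 'I_n -> field n) (Th beta : field n).
Hypothesis Hg : forall m, (1 <= m)%nat -> 0 < gamma m.
Hypothesis Srho : smooth rho.
Hypothesis Su : forall i, smooth (u i).
Hypothesis STh : smooth Th.
Hypothesis Sbeta : smooth beta.
Hypothesis Hrho : forall x t, 0 < rho x t.
Hypothesis HTh : forall x t, 0 < Th x t.
Hypothesis Hrad : forall x t, Rbar_lt (exp (beta x t)) (Rad gamma).

Lemma Ck1_dx (f : field n) i : smooth f -> Ck 1 (dx i f).
Proof. move=> H; exact: (proj1 (proj2 (proj2 (proj2 (H 2%nat)))) i). Qed.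

Lemma HD_M1 x t l : HD x t l (fun y s => Mm1 gamma (beta y s))
  (ld x t l beta * (1 - Mm1 gamma (beta x t) * cc gamma (beta x t))).
Proof. apply: (HD_comp x t l (Mm1 gamma) beta); [apply HM1 => // | apply Ck1_HD; apply Sbeta]. Qed.

Lemma HD_lnW x t l : HD x t l (fun y s => ln (sum1 (wt gamma (beta y s))))
  (ld x t l beta * cc gamma (beta x t)).
Proof.
apply: (HD_comp x t l (fun z => ln (sum1 (wt gamma z))) beta); [apply HlnW => // | apply Ck1_HD; apply Sbeta].
Qed.

Lemma HD_cc x t l : exists d, HD x t l (fun y s => cc gamma (beta y s)) d.
Proof.
have [d Hd] := ex_cc gamma Hg (beta x t) (Hrad x t).
eexists; apply: (HD_comp x t l (cc gamma) beta); [exact Hd | apply Ck1_HD; apply Sbeta].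
Qed.

Lemma HD_M2 x t l : exists d, HD x t l (fun y s => Mm2 gamma (beta y s)) d.
Proof.
have [d Hd] := ex_M2 gamma Hg (beta x t) (Hrad x t).
eexists; apply: (HD_comp x t l (Mm2 gamma) beta); [exact Hd | apply Ck1_HD; apply Sbeta].
Qed.

Lemma Wpos y s : 0 < sum1 (wt gamma (beta y s)).
Proof. rewrite W_eq; apply W_pos => //. Qed.


Lemma HD_ccD x t l : HD x t l (fun y s => cc gamma (beta y s))
  (ld x t l beta * Derive (cc gamma) (beta x t)).
Proof.
apply: (HD_comp x t l (cc gamma) beta); [apply Derive_correct, ex_cc => // | apply Ck1_HD; apply Sbeta].
Qed.

Lemma HD_M2D x t l : HD x t l (fun y s => Mm2 gamma (beta y s))
  (ld x t l beta * Derive (Mm2 gamma) (beta x t)).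
Proof.
apply: (HD_comp x t l (Mm2 gamma) beta); [apply Derive_correct, ex_M2 => // | apply Ck1_HD; apply Sbeta].
Qed.

Lemma HD_ld x t l (f : field n) d : HD x t l f d -> HD x t l f (ld x t l f).
Proof. by move=> H; rewrite (HD_unique _ _ _ _ _ H). Qed.

Ltac ck1s := first [ apply Srho | apply Su | apply STh | apply Sbeta
  | apply Ck1_dx; first [ apply Srho | apply Su | apply STh | apply Sbeta ] ].

Ltac pos := cbv beta; first [ apply Hrho | apply HTh | apply Wpos
  | apply Rgt_not_eq; pos
  | apply Rmult_lt_0_compat; pos | apply PI_RGT_0 | lra ].

Ltac hd :=
  cbv beta;
  lazymatch goal with
  | |- HD ?x ?t ?l (fun _ _ => ?c) _ => apply HD_const
  | |- HD ?x ?t ?l (fun y s => Mm1 _ (beta y s)) _ => apply HD_M1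
  | |- HD ?x ?t ?l (fun y s => Mm2 _ (beta y s)) _ => apply HD_M2D
  | |- HD ?x ?t ?l (fun y s => cc _ (beta y s)) _ => apply HD_ccD
  | |- HD ?x ?t ?l (fun y s => ln (sum1 (wt _ (beta y s)))) _ => apply HD_lnW
  | |- HD ?x ?t ?l (fun y s => @?a y s + @?b y s) _ => apply (HD_plus x t l a b); hd
  | |- HD ?x ?t ?l (fun y s => @?a y s - @?b y s) _ => apply (HD_minus x t l a b); hd
  | |- HD ?x ?t ?l (fun y s => - @?a y s) _ => apply (HD_opp x t l a); hd
  | |- HD ?x ?t ?l (fun y s => @?a y s * @?b y s) _ => apply (HD_mult x t l a b); hd
  | |- HD ?x ?t ?l (fun y s => @?a y s / @?b y s) _ => apply (HD_div x t l a b); [pos | hd | hd]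
  | |- HD ?x ?t ?l (fun y s => / @?a y s) _ => apply (HD_inv x t l a); [pos | hd]
  | |- HD ?x ?t ?l (fun y s => @?a y s ^ 2) _ => apply (HD_pow2 x t l a); hd
  | |- HD ?x ?t ?l (fun y s => sumI _ (fun j => @?F j y s)) _ => apply (HD_sum x t l _ F); intro; hd
  | |- HD ?x ?t ?l (fun y s => ln (@?a y s)) _ => apply (HD_ln x t l a); [pos | hd]
  | |- HD ?x ?t ?l (fun y s => ?f y s) _ => apply (Ck1_HD f x t l); ck1s
  | |- HD ?x ?t ?l ?f _ => apply (Ck1_HD f x t l); ck1s
  end.

Definition chiF : field n := fun y s => chi_c gamma (rho y s) (Th y s) (beta y s).

Lemma HD_chi x t l : HD x t l chiF
  (ld x t l rho / rho x t + ld x t l Th / Th x t - cc gamma (beta x t) * ld x t l beta).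
Proof.
apply: (HD_ext _ _ _ (fun y s => ln (rho y s) + ln (Th y s) - ln (sum1 (wt gamma (beta y s))))).
  move=> y s; rewrite /chiF /chi_c /Rdiv.
  have h1 := Hrho y s; have h2 := HTh y s; have h3 := Wpos y s.
  rewrite ln_mult; [|by apply Rmult_lt_0_compat | by apply Rinv_0_lt_compat].
  rewrite ln_mult // ln_Rinv //; ring.
apply: HD_eq; [hd | cbv beta; rewrite /Rdiv; ring].
Qed.

Lemma dchi i y s : dx i chiF y s =
  dx i rho y s / rho y s + dx i Th y s / Th y s - cc gamma (beta y s) * dx i beta y s.
Proof. rewrite ld_dx; apply HD_unique, HD_chi. Qed.

Definition PF i : field n := fun y s => nu_c gamma (rho y s) (Th y s) (beta y s) * dx i chiF y s.
Definition KF i : field n := fun y s => kappa_c n gamma (rho y s) (Th y s) (beta y s) * dx i Th y s.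
Definition MF j i : field n := fun y s => mu_c gamma (rho y s) (Th y s) (beta y s) * Defs.sigma u j i y s.

Lemma EX_P x t l i : HD x t l (PF i) (ld x t l (PF i)).
Proof.
apply: HD_ld.
apply: (HD_ext _ _ _ (fun y s => rho y s * Th y s * (Mm2 gamma (beta y s) - Mm1 gamma (beta y s) ^ 2)
   * (dx i rho y s / rho y s + dx i Th y s / Th y s - cc gamma (beta y s) * dx i beta y s))).
  by move=> y s; rewrite /PF dchi /nu_c.
hd.
Qed.

Lemma EX_K x t l i : HD x t l (KF i) (ld x t l (KF i)).
Proof.
apply: HD_ld.
apply: (HD_ext _ _ _ (fun y s => (INR n + 2) / 2 * rho y s * Th y s * Mm2 gamma (beta y s) * dx i Th y s)).
  by move=> y s; rewrite /KF /kappa_c.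
hd.
Qed.

Lemma EX_M x t l j i : HD x t l (MF j i) (ld x t l (MF j i)).
Proof.
apply: HD_ld.
apply: (HD_ext _ _ _ (fun y s => rho y s * Th y s * Mm1 gamma (beta y s) *
   (dx i (u j) y s + dx j (u i) y s - 2 / INR n * sumI n (fun k => dx k (u k) y s) * kron j i))).
  by move=> y s; rewrite /MF /mu_c /Defs.sigma /divx.
hd.
Qed.


Local Notation M1v x t := (Mm1 gamma (beta x t)).
Local Notation d1v x t := (1 - Mm1 gamma (beta x t) * cc gamma (beta x t)).

Lemma D_a x t l : ld x t l (fun y s => rho y s * Mm1 gamma (beta y s)) =
  ld x t l rho * M1v x t + rho x t * (ld x t l beta * d1v x t).
Proof. apply HD_unique; apply: HD_eq; [hd | cbv beta; ring]. Qed.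

Lemma D_a2 x t l i : ld x t l (fun y s => rho y s * Mm1 gamma (beta y s) * u i y s) =
  (ld x t l rho * M1v x t + rho x t * (ld x t l beta * d1v x t)) * u i x t
  + rho x t * M1v x t * ld x t l (u i).
Proof. apply HD_unique; apply: HD_eq; [hd | cbv beta; ring]. Qed.

Lemma D_b2 x t l i : ld x t l (fun y s => rho y s * u i y s) =
  ld x t l rho * u i x t + rho x t * ld x t l (u i).
Proof. apply HD_unique; apply: HD_eq; [hd | cbv beta; ring]. Qed.

Lemma D_c2 x t l j i : ld x t l (fun y s => rho y s * u j y s * u i y s) =
  (ld x t l rho * u j x t + rho x t * ld x t l (u j)) * u i x t + rho x t * u j x t * ld x t l (u i).
Proof. apply HD_unique; apply: HD_eq; [hd | cbv beta; ring]. Qed.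

Lemma D_c3 x t l : ld x t l (fun y s => rho y s * Th y s * Mm1 gamma (beta y s)) =
  (ld x t l rho * Th x t + rho x t * ld x t l Th) * M1v x t + rho x t * Th x t * (ld x t l beta * d1v x t).
Proof. apply HD_unique; apply: HD_eq; [hd | cbv beta; ring]. Qed.

Lemma D_e1 x t l : ld x t l (fun y s => rho y s * sumI n (fun j => u j y s ^ 2)
                                  + INR n * rho y s * Th y s * Mm1 gamma (beta y s)) =
  ld x t l rho * sumI n (fun j => u j x t ^ 2) + rho x t * sumI n (fun j => 2 * u j x t * ld x t l (u j))
  + INR n * ((ld x t l rho * Th x t + rho x t * ld x t l Th) * M1v x t + rho x t * Th x t * (ld x t l beta * d1v x t)).
Proof. apply HD_unique; apply: HD_eq; [hd | cbv beta; ring]. Qed.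

Lemma D_e2 x t l i : ld x t l (fun y s => rho y s * sumI n (fun j => u j y s ^ 2) * u i y s
                     + (INR n + 2) * rho y s * Th y s * Mm1 gamma (beta y s) * u i y s) =
  (ld x t l rho * sumI n (fun j => u j x t ^ 2) + rho x t * sumI n (fun j => 2 * u j x t * ld x t l (u j))) * u i x t
  + rho x t * sumI n (fun j => u j x t ^ 2) * ld x t l (u i)
  + (INR n + 2) * (((ld x t l rho * Th x t + rho x t * ld x t l Th) * M1v x t
                    + rho x t * Th x t * (ld x t l beta * d1v x t)) * u i x t
                   + rho x t * Th x t * M1v x t * ld x t l (u i)).
Proof. apply HD_unique; apply: HD_eq; [hd | cbv beta; ring]. Qed.

Lemma lnZ y s : ln (Zpart n gamma (beta y s) (Th y s)) =
  INR n / 2 * ln (2 * PI * Th y s) + ln (sum1 (wt gamma (beta y s))).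
Proof.
rewrite /Zpart /Rpower ln_mult ?ln_exp //; [apply exp_pos | apply Wpos].
Qed.

Definition Lval x t := ln (rho x t) - ln (Zpart n gamma (beta x t) (Th x t)) - 1 - INR n / 2.

Lemma HD_L x t l : HD x t l (fun y s => ln (rho y s) - ln (Zpart n gamma (beta y s) (Th y s)) - 1 - INR n / 2)
  (ld x t l rho / rho x t - INR n / 2 * (ld x t l Th / Th x t) - cc gamma (beta x t) * ld x t l beta).
Proof.
apply: (HD_ext _ _ _ (fun y s => ln (rho y s) - (INR n / 2 * ln (2 * PI * Th y s)
             + ln (sum1 (wt gamma (beta y s)))) - 1 - INR n / 2)).
  by move=> y s; rewrite lnZ.
apply: HD_eq; [hd | cbv beta].
have := HTh x t; have := Hrho x t; have := PI_RGT_0 => h1 h2 h3.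
field; repeat split; apply Rgt_not_eq => //.
Qed.

Lemma HD_S x t l : HD x t l (entropy n gamma rho Th beta)
  (ld x t l rho * (M1v x t * Lval x t + beta x t) + rho x t * (ld x t l beta * d1v x t * Lval x t
     + M1v x t * (ld x t l rho / rho x t - INR n / 2 * (ld x t l Th / Th x t)
                  - cc gamma (beta x t) * ld x t l beta) + ld x t l beta)).
Proof.
apply: (HD_ext _ _ _ (fun y s => rho y s * (Mm1 gamma (beta y s) *
   (ln (rho y s) - ln (Zpart n gamma (beta y s) (Th y s)) - 1 - INR n / 2) + beta y s))); first by [].
apply: HD_eq.
  apply HD_mult; first by hd.
  apply HD_plus; last by hd.
  apply HD_mult; [by hd | by apply HD_L].
rewrite /Lval; cbv beta; ring.
Qed.

Lemma D_s1 x t l : ld x t l (entropy n gamma rho Th beta) =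
  ld x t l rho * (M1v x t * Lval x t + beta x t) + rho x t * (ld x t l beta * d1v x t * Lval x t
     + M1v x t * (ld x t l rho / rho x t - INR n / 2 * (ld x t l Th / Th x t)
                  - cc gamma (beta x t) * ld x t l beta) + ld x t l beta).
Proof. apply HD_unique, HD_S. Qed.

Lemma sigma_sym i j y s : Defs.sigma u i j y s = Defs.sigma u j i y s.
Proof. rewrite /Defs.sigma /kron eq_sym; ring. Qed.

Lemma D_s2 (eps : R) x t i : ld x t (Some i) (eflux n eps gamma rho u Th beta i) =
  (ld x t (Some i) rho * (M1v x t * Lval x t + beta x t) + rho x t * (ld x t (Some i) beta * d1v x t * Lval x t
     + M1v x t * (ld x t (Some i) rho / rho x t - INR n / 2 * (ld x t (Some i) Th / Th x t)
                  - cc gamma (beta x t) * ld x t (Some i) beta) + ld x t (Some i) beta)) * u i x t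
  + rho x t * (M1v x t * Lval x t + beta x t) * ld x t (Some i) (u i)
  + eps * (- ((ld x t (Some i) rho / rho x t - INR n / 2 * (ld x t (Some i) Th / Th x t)
                  - cc gamma (beta x t) * ld x t (Some i) beta)
               * (nu_c gamma (rho x t) (Th x t) (beta x t) * dx i chiF x t)
              + Lval x t * ld x t (Some i) (PF i))
           + (ld x t (Some i) (KF i) / Th x t
              - kappa_c n gamma (rho x t) (Th x t) (beta x t) * ld x t (Some i) Th * ld x t (Some i) Th
                / Th x t ^ 2)).
Proof.
apply HD_unique.
apply: (HD_ext _ _ _ (fun y s => entropy n gamma rho Th beta y s * u i y s
   + eps * (- ((ln (rho y s) - ln (Zpart n gamma (beta y s) (Th y s)) - 1 - INR n / 2) * PF i y s)
            + KF i y s * / Th y s))).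
  move=> y s; rewrite /eflux /PF /KF /Rdiv; cbv beta; fold chiF; ring.
apply: HD_eq.
  apply HD_plus.
    apply HD_mult; [apply HD_S | hd].
  apply HD_scal, HD_plus.
    apply HD_opp, HD_mult; [apply HD_L | apply EX_P].
  apply HD_mult; [apply EX_K | apply HD_inv; [apply Rgt_not_eq, HTh | hd]].
rewrite /PF /KF /entropy /Lval; cbv beta; rewrite (ld_dx Th x t i).
have := HTh x t; have := Hrho x t => h1 h2; field; split; apply Rgt_not_eq => //.
Qed.

Lemma D_f x t i : ld x t (Some i) (fun y s =>
     (INR n + 2) * nu_c gamma (rho y s) (Th y s) (beta y s) * Th y s * dx i chiF y s
   + 2 * kappa_c n gamma (rho y s) (Th y s) (beta y s) * dx i Th y s
   + 2 * mu_c gamma (rho y s) (Th y s) (beta y s) * sumI n (fun j => Defs.sigma u i j y s * u j y s)) =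
  (INR n + 2) * (ld x t (Some i) Th * (nu_c gamma (rho x t) (Th x t) (beta x t) * dx i chiF x t)
                 + Th x t * ld x t (Some i) (PF i))
  + 2 * ld x t (Some i) (KF i)
  + 2 * (sumI n (fun j => ld x t (Some i) (MF j i) * u j x t)
         + mu_c gamma (rho x t) (Th x t) (beta x t) * sumI n (fun j => Defs.sigma u i j x t * ld x t (Some i) (u j))).
Proof.
apply HD_unique.
apply: (HD_ext _ _ _ (fun y s => (INR n + 2) * (Th y s * PF i y s) + 2 * KF i y s
                                 + 2 * sumI n (fun j => MF j i y s * u j y s))).
  move=> y s.
  have E : sumI n (fun j => MF j i y s * u j y s) =
     mu_c gamma (rho y s) (Th y s) (beta y s) * sumI n (fun j => Defs.sigma u i j y s * u j y s).
    rewrite -sumI_scal; apply sumI_ext => j; rewrite /MF sigma_sym; ring.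
  rewrite E /PF /KF; cbv beta; fold chiF; ring.
apply: HD_eq.
  apply HD_plus; first apply HD_plus.
  - apply HD_scal, HD_mult; [hd | apply EX_P].
  - apply HD_scal, EX_K.
  - apply HD_scal, HD_sum => j; apply HD_mult; [apply EX_M | hd].
rewrite sumI_plus.
have -> : sumI n (fun j => MF j i x t * ld x t (Some i) (u j)) =
          mu_c gamma (rho x t) (Th x t) (beta x t) * sumI n (fun j => Defs.sigma u i j x t * ld x t (Some i) (u j)).
  rewrite -sumI_scal; apply sumI_ext => j; rewrite /MF sigma_sym; ring.
rewrite /PF; cbv beta; ring.
Qed.

Lemma test1 x t l : ld x t l (fun y s => rho y s * Mm1 gamma (beta y s)) =
  ld x t l rho * Mm1 gamma (beta x t) + rho x t * (ld x t l beta * (1 - Mm1 gamma (beta x t) * cc gamma (beta x t))).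
Proof. apply HD_unique; apply: HD_eq; [hd | cbv beta; ring]. Qed.

End Fields.
Section Alg.
Variable n : nat.
Variables (eps rho0 Th0 beta0 M1 cc0 L0 nu0 ka0 mu0 Rt Tt Bt : R).
Variables (u0 Vt Rx Tx Bx E K X : 'I_n -> R) (Vx Mo sg : 'I_n -> 'I_n -> R).
Variables (a1 e1 s1 : R) (a2 b2 e2 f s2 c1 c3 : 'I_n -> R) (c2 : 'I_n -> 'I_n -> R).

Local Notation d1 := (1 - M1 * cc0).
Local Notation usq := (sumI n (fun j => u0 j ^ 2)).
Local Notation dv := (sumI n (fun k => Vx k k)).
Local Notation Lx i := (Rx i / rho0 - INR n / 2 * (Tx i / Th0) - cc0 * Bx i).

Lemma ALG :
  (1 <= n)%nat -> rho0 <> 0 -> Th0 <> 0 -> eps <> 0 ->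
  (forall i, X i = Rx i / rho0 + Tx i / Th0 - cc0 * Bx i) ->
  (forall i j, sg i j = Vx j i + Vx i j - 2 / INR n * dv * kron i j) ->
  a1 = Rt * M1 + rho0 * (Bt * d1) ->
  (forall i, a2 i = (Rx i * M1 + rho0 * (Bx i * d1)) * u0 i + rho0 * M1 * Vx i i) ->
  (forall i, b2 i = Rx i * u0 i + rho0 * Vx i i) ->
  (forall j, c1 j = Rt * u0 j + rho0 * Vt j) ->
  (forall j i, c2 j i = (Rx i * u0 j + rho0 * Vx i j) * u0 i + rho0 * u0 j * Vx i i) ->
  (forall j, c3 j = (Rx j * Th0 + rho0 * Tx j) * M1 + rho0 * Th0 * (Bx j * d1)) ->
  e1 = Rt * usq + rho0 * sumI n (fun j => 2 * u0 j * Vt j)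
       + INR n * ((Rt * Th0 + rho0 * Tt) * M1 + rho0 * Th0 * (Bt * d1)) ->
  (forall i, e2 i = (Rx i * usq + rho0 * sumI n (fun j => 2 * u0 j * Vx i j)) * u0 i
       + rho0 * usq * Vx i i
       + (INR n + 2) * (((Rx i * Th0 + rho0 * Tx i) * M1 + rho0 * Th0 * (Bx i * d1)) * u0 i
                        + rho0 * Th0 * M1 * Vx i i)) ->
  (forall i, f i = (INR n + 2) * (Tx i * (nu0 * X i) + Th0 * E i) + 2 * K i
       + 2 * (sumI n (fun j => Mo j i * u0 j) + mu0 * sumI n (fun j => sg i j * Vx i j))) ->
  s1 = Rt * (M1 * L0 + beta0) + rho0 * (Bt * d1 * L0
         + M1 * (Rt / rho0 - INR n / 2 * (Tt / Th0) - cc0 * Bt) + Bt) ->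
  (forall i, s2 i = (Rx i * (M1 * L0 + beta0) + rho0 * (Bx i * d1 * L0 + M1 * Lx i + Bx i)) * u0 i
       + rho0 * (M1 * L0 + beta0) * Vx i i
       + eps * (- (Lx i * (nu0 * X i) + L0 * E i) + (K i / Th0 - ka0 * Tx i * Tx i / Th0 ^ 2))) ->
  a1 + sumI n a2 = eps * sumI n E ->
  Rt + sumI n b2 = 0 ->
  (forall j, c1 j + sumI n (fun i => c2 j i) + c3 j = eps * sumI n (fun i => Mo j i)) ->
  e1 + sumI n e2 = eps * sumI n f ->
  s1 + sumI n s2 = - eps * (nu0 * sumI n (fun i => X i ^ 2)
     + ka0 * sumI n (fun i => (Tx i / Th0) ^ 2)
     + mu0 / (2 * Th0) * sumI n (fun i => sumI n (fun j => sg i j * sg i j))).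
Proof.
move=> Hn Hr HT He HX Hsg Ha1 Ha2 Hb2 Hc1 Hc2 Hc3 He1 He2 Hf Hs1 Hs2 Eq1 Eq2 Eq3 Eq4.
have Hn0 : INR n <> 0 by apply not_0_INR; case: n Hn.
have F1 : sumI n a2 = sumI n (fun i => M1 * (Rx i * u0 i)) + sumI n (fun i => rho0 * d1 * (Bx i * u0 i))
                     + sumI n (fun i => rho0 * M1 * Vx i i).
  rewrite -!sumI_plus; apply sumI_ext => i; rewrite Ha2; cbv beta; ring.
rewrite !sumI_scal in F1.
rewrite F1 Ha1 in Eq1.
have F2 : sumI n b2 = sumI n (fun i => Rx i * u0 i) + sumI n (fun i => rho0 * Vx i i).
  rewrite -!sumI_plus; apply sumI_ext => i; rewrite Hb2; cbv beta; ring.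
rewrite !sumI_scal in F2.
rewrite F2 in Eq2.
have F3a : forall j, sumI n (fun i => c2 j i) = u0 j * sumI n (fun i => Rx i * u0 i)
    + rho0 * sumI n (fun i => Vx i j * u0 i) + rho0 * u0 j * dv.
  move=> j; rewrite -!sumI_scal -!sumI_plus; apply sumI_ext => i; rewrite Hc2; cbv beta; ring.
have F3 : sumI n (fun j => u0 j * (c1 j + sumI n (fun i => c2 j i) + c3 j)) =
   sumI n (fun j => Rt * u0 j ^ 2) + sumI n (fun j => rho0 * (u0 j * Vt j))
 + sumI n (fun j => sumI n (fun i => Rx i * u0 i) * u0 j ^ 2)
 + sumI n (fun j => rho0 * (u0 j * sumI n (fun i => Vx i j * u0 i)))
 + sumI n (fun j => rho0 * dv * u0 j ^ 2)
 + sumI n (fun j => Th0 * M1 * (Rx j * u0 j))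
 + sumI n (fun j => rho0 * M1 * (Tx j * u0 j))
 + sumI n (fun j => rho0 * Th0 * d1 * (Bx j * u0 j)).
  rewrite -!sumI_plus; apply sumI_ext => j; rewrite Hc1 F3a Hc3; cbv beta; ring.
rewrite !sumI_scal in F3.
have Eq3s := sumI_ext _ _ (fun j => f_equal (Rmult (u0 j)) (Eq3 j)).
have F3r : sumI n (fun j => u0 j * (eps * sumI n (fun i => Mo j i))) =
   eps * sumI n (fun i => sumI n (fun j => Mo j i * u0 j)).
  rewrite (sumI_swap (fun i j => Mo j i * u0 j)) -sumI_scal; apply sumI_ext => j.
  rewrite -!sumI_scal; apply sumI_ext => i; cbv beta; ring.
rewrite F3 F3r in Eq3s.
have G1 : sumI n (fun j => 2 * u0 j * Vt j) = 2 * sumI n (fun j => u0 j * Vt j).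
  rewrite -sumI_scal; apply sumI_ext => j; ring.
have G2 : forall i, sumI n (fun j => 2 * u0 j * Vx i j) = 2 * sumI n (fun j => u0 j * Vx i j).
  move=> i; rewrite -sumI_scal; apply sumI_ext => j; ring.
have G3 : sumI n (fun j => u0 j * sumI n (fun i => Vx i j * u0 i)) =
          sumI n (fun i => u0 i * sumI n (fun j => u0 j * Vx i j)).
  have -> : sumI n (fun j => u0 j * sumI n (fun i => Vx i j * u0 i)) =
            sumI n (fun j => sumI n (fun i => u0 j * (Vx i j * u0 i))).
    apply sumI_ext => j; by rewrite sumI_scal.
  have -> : sumI n (fun i => u0 i * sumI n (fun j => u0 j * Vx i j)) =
            sumI n (fun i => sumI n (fun j => u0 i * (u0 j * Vx i j))).
    apply sumI_ext => i; by rewrite sumI_scal.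
  rewrite sumI_swap; apply sumI_ext => i; apply sumI_ext => j; ring.
rewrite G3 in Eq3s.
have F4 : sumI n e2 =
   sumI n (fun i => usq * (Rx i * u0 i))
 + sumI n (fun i => 2 * rho0 * (u0 i * sumI n (fun j => u0 j * Vx i j)))
 + sumI n (fun i => rho0 * usq * Vx i i)
 + sumI n (fun i => (INR n + 2) * Th0 * M1 * (Rx i * u0 i))
 + sumI n (fun i => (INR n + 2) * rho0 * M1 * (Tx i * u0 i))
 + sumI n (fun i => (INR n + 2) * rho0 * Th0 * d1 * (Bx i * u0 i))
 + sumI n (fun i => (INR n + 2) * rho0 * Th0 * M1 * Vx i i).
  rewrite -!sumI_plus; apply sumI_ext => i; rewrite He2 G2; cbv beta; ring.
rewrite !sumI_scal in F4.
have F4r : sumI n f =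
   sumI n (fun i => (INR n + 2) * nu0 * (Tx i * X i))
 + sumI n (fun i => (INR n + 2) * Th0 * E i)
 + sumI n (fun i => 2 * K i)
 + sumI n (fun i => 2 * sumI n (fun j => Mo j i * u0 j))
 + sumI n (fun i => 2 * mu0 * sumI n (fun j => sg i j * Vx i j)).
  rewrite -!sumI_plus; apply sumI_ext => i; rewrite Hf; cbv beta; ring.
rewrite !sumI_scal in F4r.
rewrite F4 F4r He1 G1 in Eq4.
have Fs : sumI n (fun i => sumI n (fun j => sg i j * sg i j)) =
          2 * sumI n (fun i => sumI n (fun j => sg i j * Vx i j)).
  have Hsym : forall i j, sg j i = sg i j.
    move=> i j; rewrite !Hsg /kron eq_sym; ring.
  have Htr : sumI n (fun i => sg i i) = 0.
    have -> : sumI n (fun i => sg i i) = sumI n (fun i => 2 * Vx i i + (- (2 / INR n * dv))).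
      apply sumI_ext => i; rewrite Hsg /kron eqxx; ring.
    rewrite sumI_plus sumI_scal sumI_const; field; exact Hn0.
  have key : forall C, (forall i j, sg i j = Vx j i + Vx i j + C * kron i j) ->
    sumI n (fun i => sumI n (fun j => sg i j * sg i j)) =
    sumI n (fun i => sumI n (fun j => sg i j * Vx j i)) + sumI n (fun i => sumI n (fun j => sg i j * Vx i j))
    + C * sumI n (fun i => sumI n (fun j => sg i j * kron i j)).
    move=> C HC.
    rewrite -!sumI_scal -!sumI_plus; apply sumI_ext => i; rewrite -!sumI_scal -!sumI_plus.
    apply sumI_ext => j; cbv beta; rewrite {1}HC; ring.
  rewrite (key (- (2 / INR n * dv))); last by move=> i j; rewrite Hsg; ring.
  have -> : sumI n (fun i => sumI n (fun j => sg i j * kron i j)) = 0.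
    rewrite -Htr; apply sumI_ext => i; apply sumI_kron.
  have -> : sumI n (fun i => sumI n (fun j => sg i j * Vx j i)) =
            sumI n (fun i => sumI n (fun j => sg i j * Vx i j)).
    rewrite sumI_swap; apply sumI_ext => i; apply sumI_ext => j; by rewrite Hsym.
  ring.
have Ft : sumI n s2 =
   sumI n (fun i => (M1 * L0 + beta0) * (Rx i * u0 i))
 + sumI n (fun i => rho0 * d1 * L0 * (Bx i * u0 i))
 + sumI n (fun i => M1 * (Rx i * u0 i))
 + sumI n (fun i => (- (rho0 * M1 * INR n / 2 / Th0)) * (Tx i * u0 i))
 + sumI n (fun i => (- (rho0 * M1 * cc0)) * (Bx i * u0 i))
 + sumI n (fun i => rho0 * (Bx i * u0 i))
 + sumI n (fun i => rho0 * (M1 * L0 + beta0) * Vx i i)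
 + sumI n (fun i => (- (eps * nu0)) * X i ^ 2)
 + sumI n (fun i => (eps * nu0 * (INR n + 2) / (2 * Th0)) * (Tx i * X i))
 + sumI n (fun i => (- (eps * L0)) * E i)
 + sumI n (fun i => (eps / Th0) * K i)
 + sumI n (fun i => (- (eps * ka0 / Th0 ^ 2)) * Tx i ^ 2).
  rewrite -!sumI_plus; apply sumI_ext => i; rewrite Hs2; cbv beta; rewrite HX; field; split => //.
rewrite !sumI_scal in Ft.
have Fd : sumI n (fun i => (Tx i / Th0) ^ 2) = / Th0 ^ 2 * sumI n (fun i => Tx i ^ 2).
  rewrite -sumI_scal; apply sumI_ext => i; field; exact HT.
rewrite Ft Hs1 Fd Fs.
match type of Eq1 with ?A1 = ?B1 =>
match type of Eq2 with ?A2 = ?B2 =>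
match type of Eq3s with ?A3 = ?B3 =>
match type of Eq4 with ?A4 = ?B4 =>
match goal with |- ?Lg = ?Rg =>
  have HH : Lg - Rg = (L0 + 1 + INR n / 2) * (A1 - B1) + (beta0 - usq / (2 * Th0)) * (A2 - B2)
                      - / (2 * Th0) * ((A4 - B4) - 2 * (A3 - B3));
  [ field; split => // | ]
end end end end end.
rewrite (Rminus_diag_eq _ _ Eq1) (Rminus_diag_eq _ _ Eq2) (Rminus_diag_eq _ _ Eq3s)
        (Rminus_diag_eq _ _ Eq4) in HH.
lra.
Qed.
End Alg.
Theorem proposition4p9 (n : nat) (eps : R) (gamma : nat -> R)
  (rho : field n) (u : 'I_n -> field n) (Th beta : field n) :
  (1 <= n)%nat ->
  0 < eps ->
  (forall m, (1 <= m)%nat -> 0 <= gamma m) ->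
  (exists b, inS gamma b) ->
  smooth rho -> (forall i, smooth (u i)) -> smooth Th -> smooth beta ->
  (forall x t, 0 < rho x t) ->
  (forall x t, 0 < Th x t) ->
  (forall x t, exists delta, 0 < delta /\ inS gamma (beta x t + delta)) ->
  NSME n eps gamma rho u Th beta ->
  forall x t,
    dt (entropy n gamma rho Th beta) x t
      + sumI n (fun i => dx i (eflux n eps gamma rho u Th beta i) x t)
    = - eps * dissip n gamma rho u Th beta x t
  /\ - eps * dissip n gamma rho u Th beta x t <= 0.
Proof.
move=> Hn Heps Hg0 [b0 [Hg _]] Srho Su STh Sbeta Hrho HTh Hdel HN x t.
have Hrad : forall x t, Rbar_lt (exp (beta x t)) (Rad gamma).
  move=> y s; have [d [Hd Hin]] := Hdel y s.
  apply: (Rbar_lt_le_trans _ (exp (beta y s + d))); last exact: rad_inS Hin.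
  simpl; apply exp_increasing; lra.
have := HN x t; rewrite /NSME; cbv zeta beta => [[E1 [E2 [E3 E4]]]].
have Da := D_a n gamma rho u Th beta Hg Srho Su STh Sbeta Hrho HTh Hrad.
have Da2 := D_a2 n gamma rho u Th beta Hg Srho Su STh Sbeta Hrho HTh Hrad.
have Db2 := D_b2 n gamma rho u Th beta Hg Srho Su STh Sbeta Hrho HTh Hrad.
have Dc2 := D_c2 n gamma rho u Th beta Hg Srho Su STh Sbeta Hrho HTh Hrad.
have Dc3 := D_c3 n gamma rho u Th beta Hg Srho Su STh Sbeta Hrho HTh Hrad.
have De1 := D_e1 n gamma rho u Th beta Hg Srho Su STh Sbeta Hrho HTh Hrad.
have De2 := D_e2 n gamma rho u Th beta Hg Srho Su STh Sbeta Hrho HTh Hrad.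
have Ds1 := D_s1 n gamma rho u Th beta Hg Srho Su STh Sbeta Hrho HTh Hrad.
have Ds2 := D_s2 n gamma rho u Th beta Hg Srho Su STh Sbeta Hrho HTh Hrad.
have Df := D_f n gamma rho u Th beta Hg Srho Su STh Sbeta Hrho HTh Hrad.
have Dchi := dchi n gamma rho u Th beta Hg Srho Su STh Sbeta Hrho HTh Hrad.
split; last first.
  have Hd : 0 <= dissip n gamma rho u Th beta x t.
    have Hb := Hrad x t.
    have h1 := Hrho x t; have h2 := HTh x t.
    have hM1 := M1_nonneg gamma Hg (beta x t) Hb.
    have hM2 := M2_nonneg gamma Hg (beta x t) Hb.
    have hV := M_var gamma Hg (beta x t) Hb.
    have hn : 0 <= INR n by apply pos_INR.
    have hnu : 0 <= nu_c gamma (rho x t) (Th x t) (beta x t).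
      rewrite /nu_c; apply Rmult_le_pos; [apply Rmult_le_pos; lra | exact hV].
    have hka : 0 <= kappa_c n gamma (rho x t) (Th x t) (beta x t).
      rewrite /kappa_c; apply Rmult_le_pos; [apply Rmult_le_pos; [apply Rmult_le_pos; [lra | lra] | lra] | lra].
    have hmu : 0 <= mu_c gamma (rho x t) (Th x t) (beta x t) / (2 * Th x t).
      rewrite /mu_c /Rdiv; apply Rmult_le_pos; last by apply Rlt_le, Rinv_0_lt_compat; lra.
      apply Rmult_le_pos; [apply Rmult_le_pos; lra | lra].
    rewrite /dissip.
    apply Rplus_le_le_0_compat; first apply Rplus_le_le_0_compat.
    - apply Rmult_le_pos => //; apply sumI_nonneg => i; apply pow2_ge_0.
    - apply Rmult_le_pos => //; apply sumI_nonneg => i; apply pow2_ge_0.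
    - apply Rmult_le_pos => //; apply sumI_nonneg => i; apply sumI_nonneg => j; apply Rle_0_sqr.
  nra.
rewrite /dissip.
eapply (ALG n eps (rho x t) (Th x t) (beta x t) (Mm1 gamma (beta x t)) (cc gamma (beta x t))
   (Lval n gamma rho Th beta x t)
   (nu_c gamma (rho x t) (Th x t) (beta x t)) (kappa_c n gamma (rho x t) (Th x t) (beta x t))
   (mu_c gamma (rho x t) (Th x t) (beta x t))
   (ld x t None rho) (ld x t None Th) (ld x t None beta)
   (fun j => u j x t) (fun j => ld x t None (u j))
   (fun i => ld x t (Some i) rho) (fun i => ld x t (Some i) Th) (fun i => ld x t (Some i) beta)
   (fun i => ld x t (Some i) (PF n gamma rho Th beta i))
   (fun i => ld x t (Some i) (KF n gamma rho Th beta i))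
   (fun i => dx i (chiF n gamma rho Th beta) x t)
   (fun i j => ld x t (Some i) (u j))
   (fun j i => ld x t (Some i) (MF n gamma rho u Th beta j i))
   (fun i j => Defs.sigma u i j x t)).
21: exact E4.
20: exact E3.
19: exact E2.
18: exact E1.
exact Hn.
apply Rgt_not_eq, Hrho.
apply Rgt_not_eq, HTh.
apply Rgt_not_eq, Heps.
move=> i; exact (Dchi i x t).
move=> i j; reflexivity.
exact (Da x t None).
move=> i; exact (Da2 x t (Some i) i).
move=> i; exact (Db2 x t (Some i) i).
move=> j; exact (Db2 x t None j).
move=> j i; exact (Dc2 x t (Some i) j i).
move=> j; exact (Dc3 x t (Some j)).
exact (De1 x t None).
move=> i; exact (De2 x t (Some i) i).
move=> i; exact (Df x t i).
exact (Ds1 x t None).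
move=> i; exact (Ds2 eps x t i).
Qed.
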